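(* For every integer $n\geqslant1$, \begin{align*} &\sum_{k=0}^{n-1}(-1)^{k}\frac{2k+1}{(n-k)(n+k+1)} \sum_{m=k}^{n-1}(-1)^{m}\frac{2m+1}{(n-m)(n+m+1)}\\ &\qquad=\frac{\pi^{2}}{12}-\frac{\gamma}{2n+1} +\frac{1}{2}[\psi(2n+1)-\psi(n+1)]^{2} -\frac{1}{2n+1}\psi(2n+1)-\frac{1}{2}\psi_{1}(2n+1). \end{align*}
   Context: $\psi=\Gamma'/\Gamma$ is the digamma function, $\psi_1=\psi'$ the trigamma function, and $\gamma$ the Euler–Mascheroni constant. *)

(* Defs.v *)
From Stdlib Require Import Reals.
From Coquelicot Require Import Coquelicot.
Open Scope R_scope.

Definition harmonic (n : nat) : R := sum_n_m (fun k => / INR k) 1 n.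

Definition euler_gamma : R := real (Lim_seq (fun n => harmonic n - ln (INR n))).

(* Digamma psi = Gamma'/Gamma, via its standard series (DLMF 5.7.6),
   valid for x > 0:  psi(x) = -gamma + sum_{k>=0} (1/(k+1) - 1/(k+x)). *)
Definition digamma (x : R) : R :=
  - euler_gamma + Series (fun k => / (INR k + 1) - / (INR k + x)).

(* Trigamma psi_1 = psi', via its standard series (DLMF 5.15.1):
   psi_1(x) = sum_{k>=0} 1/(k+x)^2. *)
Definition trigamma (x : R) : R := Series (fun k => / (INR k + x) ^ 2).

(* Main.v *)
Require Import Defs.
From Stdlib Require Import Reals.
From Coquelicot Require Import Coquelicot.
Open Scope R_scope.
From Stdlib Require Import Lra Lia.


Lemma s2c2 x : sin x ^ 2 = 1 - cos x ^ 2.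
Proof. pose proof (sin2_cos2 x). unfold Rsqr in H. nra. Qed.

Definition Iq (m : nat) : R := RInt (fun x => cos x ^ (2*m)) 0 (PI/2).
Definition Jq (m : nat) : R := RInt (fun x => x ^ 2 * cos x ^ (2*m)) 0 (PI/2).

Lemma PI2_pos : 0 < PI/2.
Proof. pose proof PI_RGT_0; lra. Qed.

Lemma exI m : ex_RInt (fun x => cos x ^ (2*m)) 0 (PI/2).
Proof. apply (ex_RInt_continuous (V:=R_CompleteNormedModule)); intros; apply (ex_derive_continuous (V:=R_NormedModule)); auto_derive; auto. Qed.
Lemma exJ m : ex_RInt (fun x => x ^ 2 * cos x ^ (2*m)) 0 (PI/2).
Proof. apply (ex_RInt_continuous (V:=R_CompleteNormedModule)); intros; apply (ex_derive_continuous (V:=R_NormedModule)); auto_derive; auto. Qed.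

Lemma I_rec m : (2 * INR m + 2) * Iq (S m) = (2 * INR m + 1) * Iq m.
Proof.
  set (F := fun x => sin x * cos x ^ (2*m+1)).
  set (h := fun x => (2 * INR m + 2) * cos x ^ (2 * S m) - (2 * INR m + 1) * cos x ^ (2*m)).
  assert (H1 : is_RInt h 0 (PI/2) (minus (F (PI/2)) (F 0))).
  { apply (is_RInt_derive (V:=R_CompleteNormedModule)).
    - intros x _. unfold F, h. auto_derive; auto.
      replace (m + (m + 0) + 1)%nat with (2*m+1)%nat by lia.
      replace (Init.Nat.pred (2*m+1)) with (2*m)%nat by lia.
      replace (2 * S m)%nat with (2*m+2)%nat by lia.
      rewrite !pow_add. rewrite plus_INR, mult_INR. simpl INR.
      pose proof (s2c2 x). set (K := cos x ^ (2*m)) in *.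
      replace (sin x) with (sin x) by reflexivity.
      transitivity ((2 * INR m + 2) * (K * (cos x * (cos x * 1))) - (2 * INR m + 1) * K
                    - (2 * INR m + 1) * K * (sin x ^ 2 - (1 - cos x ^ 2))); [ring|].
      rewrite H. ring.
    - intros x _. unfold h. apply (ex_derive_continuous (V:=R_NormedModule)); auto_derive; auto. }
  assert (HF : minus (F (PI/2)) (F 0) = 0).
  { unfold F, minus, plus, opp; simpl. rewrite sin_0, cos_PI2.
    rewrite pow_i by lia. ring. }
  rewrite HF in H1.
  assert (H2 : is_RInt h 0 (PI/2) ((2 * INR m + 2) * Iq (S m) - (2 * INR m + 1) * Iq m)).
  { unfold h, Iq.
    apply (is_RInt_minus (fun x => (2 * INR m + 2) * cos x ^ (2 * S m))
                         (fun x => (2 * INR m + 1) * cos x ^ (2 * m))).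
    - apply (is_RInt_scal (fun x => cos x ^ (2 * S m))). apply (RInt_correct (V:=R_CompleteNormedModule)), exI.
    - apply (is_RInt_scal (fun x => cos x ^ (2 * m))). apply (RInt_correct (V:=R_CompleteNormedModule)), exI. }
  pose proof (is_RInt_unique _ _ _ _ H1) as E1.
  pose proof (is_RInt_unique _ _ _ _ H2) as E2. lra.
Qed.

Lemma J_rec m : Iq (S m) + 2 * (INR m + 1) ^ 2 * Jq (S m) - (INR m + 1) * (2 * INR m + 1) * Jq m = 0.
Proof.
  set (F := fun x => x * cos x ^ (2*m+2) + (INR m + 1) * x ^ 2 * sin x * cos x ^ (2*m+1)).
  set (h := fun x => cos x ^ (2 * S m) + 2 * (INR m + 1) ^ 2 * (x ^ 2 * cos x ^ (2 * S m))
             - (INR m + 1) * (2 * INR m + 1) * (x ^ 2 * cos x ^ (2*m))).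
  assert (H1 : is_RInt h 0 (PI/2) (minus (F (PI/2)) (F 0))).
  { apply (is_RInt_derive (V:=R_CompleteNormedModule)).
    - intros x _. unfold F, h. auto_derive; auto.
      replace (m + (m + 0) + 2)%nat with (2*m+2)%nat by lia.
      replace (m + (m + 0) + 1)%nat with (2*m+1)%nat by lia.
      replace (Init.Nat.pred (2*m+2)) with (2*m+1)%nat by lia.
      replace (Init.Nat.pred (2*m+1)) with (2*m)%nat by lia.
      replace (2 * S m)%nat with (2*m+2)%nat by lia.
      rewrite !pow_add, !plus_INR, !mult_INR. simpl INR.
      pose proof (s2c2 x). set (K := cos x ^ (2*m)) in *.
      transitivity (K * (cos x * (cos x * 1)) + 2 * (INR m + 1) ^ 2 * (x ^ 2 * (K * (cos x * (cos x * 1))))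
        - (INR m + 1) * (2 * INR m + 1) * (x ^ 2 * K)
        - (INR m + 1) * (2 * INR m + 1) * x ^ 2 * K * (sin x ^ 2 - (1 - cos x ^ 2))); [ring|].
      rewrite H. ring.
    - intros x _. unfold h. apply (ex_derive_continuous (V:=R_NormedModule)); auto_derive; auto. }
  assert (HF : minus (F (PI/2)) (F 0) = 0).
  { unfold F, minus, plus, opp; simpl. rewrite sin_0, cos_PI2.
    rewrite !pow_i by lia. ring. }
  rewrite HF in H1.
  assert (H2 : is_RInt h 0 (PI/2) (Iq (S m) + 2 * (INR m + 1) ^ 2 * Jq (S m) - (INR m + 1) * (2 * INR m + 1) * Jq m)).
  { unfold h, Iq, Jq.
    apply (is_RInt_minus (fun x => cos x ^ (2 * S m) + 2 * (INR m + 1) ^ 2 * (x ^ 2 * cos x ^ (2 * S m)))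
                         (fun x => (INR m + 1) * (2 * INR m + 1) * (x ^ 2 * cos x ^ (2*m)))).
    - apply (is_RInt_plus (fun x => cos x ^ (2 * S m)) (fun x => 2 * (INR m + 1) ^ 2 * (x ^ 2 * cos x ^ (2 * S m)))).
      + apply (RInt_correct (V:=R_CompleteNormedModule)), exI.
      + apply (is_RInt_scal (fun x => x ^ 2 * cos x ^ (2 * S m))). apply (RInt_correct (V:=R_CompleteNormedModule)), exJ.
    - apply (is_RInt_scal (fun x => x ^ 2 * cos x ^ (2 * m))). apply (RInt_correct (V:=R_CompleteNormedModule)), exJ. }
  pose proof (is_RInt_unique _ _ _ _ H1) as E1.
  pose proof (is_RInt_unique _ _ _ _ H2) as E2. lra.
Qed.

Lemma I0 : Iq 0 = PI/2.
Proof.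
  unfold Iq. rewrite (RInt_ext _ (fun _ => 1)).
  - rewrite RInt_const. unfold scal; simpl; unfold mult; simpl. ring.
  - intros; simpl; ring.
Qed.

Lemma J0 : Jq 0 = (PI/2)^3/3.
Proof.
  unfold Jq. apply is_RInt_unique.
  apply (is_RInt_ext (fun x => x ^ 2)).
  { intros; simpl; ring. }
  replace ((PI/2)^3/3) with (minus ((fun x => x^3/3) (PI/2)) ((fun x => x^3/3) 0)).
  2:{ unfold minus, plus, opp; simpl. field. }
  apply (is_RInt_derive (V:=R_CompleteNormedModule) (fun x => x^3/3)).
  - intros x _. auto_derive; auto. field.
  - intros x _. apply (ex_derive_continuous (V:=R_NormedModule)); auto_derive; auto.
Qed.

Lemma xcos_sin x : 0 <= x <= PI/2 -> x * cos x <= sin x.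
Proof.
  intros Hx. pose proof PI_RGT_0.
  assert (H1 : is_RInt (fun t => t * sin t) 0 x (minus ((fun t => sin t - t * cos t) x) ((fun t => sin t - t * cos t) 0))).
  { apply (is_RInt_derive (V:=R_CompleteNormedModule) (fun t => sin t - t * cos t)).
    - intros t _. auto_derive; auto. ring.
    - intros t _. apply (ex_derive_continuous (V:=R_NormedModule)); auto_derive; auto. }
  assert (H2 : 0 <= RInt (fun t => t * sin t) 0 x).
  { apply RInt_ge_0; [lra| eexists; exact H1 |].
    intros t Ht. apply Rmult_le_pos; [lra|]. apply sin_ge_0; lra. }
  rewrite (is_RInt_unique _ _ _ _ H1) in H2.
  unfold minus, plus, opp in H2; simpl in H2. rewrite sin_0 in H2. lra.
Qed.

Lemma cos_nonneg x : 0 < x < PI/2 -> 0 <= cos x.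
Proof. intros; apply cos_ge_0; lra. Qed.

Lemma J_nonneg m : 0 <= Jq m.
Proof.
  unfold Jq. apply RInt_ge_0; [pose proof PI2_pos; lra| apply exJ |].
  intros x Hx. apply Rmult_le_pos; [nra|]. apply pow_le, cos_nonneg; lra.
Qed.

Lemma I_pos m : 0 < Iq m.
Proof.
  induction m.
  - rewrite I0. apply PI2_pos.
  - pose proof (I_rec m). pose proof (pos_INR m).
    assert (Iq (S m) = (2 * INR m + 1) * Iq m / (2 * INR m + 2)) by (rewrite <- H; field; lra).
    rewrite H1. apply Rdiv_lt_0_compat; [apply Rmult_lt_0_compat|]; lra.
Qed.

Lemma J_bound m : Jq (S m) <= Iq m - Iq (S m).
Proof.
  assert (H : is_RInt (fun x => cos x ^ (2*m) - cos x ^ (2 * S m)) 0 (PI/2) (Iq m - Iq (S m))).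
  { apply (is_RInt_minus (fun x => cos x ^ (2*m)) (fun x => cos x ^ (2 * S m)));
      apply (RInt_correct (V:=R_CompleteNormedModule)), exI. }
  apply (is_RInt_le _ _ _ _ _ _ (Rlt_le _ _ PI2_pos) (RInt_correct (V:=R_CompleteNormedModule) _ _ _ (exJ (S m))) H).
  intros x Hx.
  pose proof (xcos_sin x ltac:(lra)). pose proof (cos_nonneg x Hx).
  pose proof (s2c2 x) as Hsc.
  replace (2 * S m)%nat with (2*m+2)%nat by lia. rewrite pow_add.
  assert (0 <= cos x ^ (2*m)) by (apply pow_le; lra).
  set (K := cos x ^ (2*m)) in *.
  assert (0 <= x * cos x) by (apply Rmult_le_pos; lra).
  assert ((x * cos x)^2 <= sin x ^ 2) by (apply pow_incr; lra).
  assert (x ^ 2 * cos x ^ 2 <= 1 - cos x ^ 2) by (rewrite <- Hsc, <- Rpow_mult_distr; lra).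
  simpl pow in *. nra.
Qed.

Definition rq (m : nat) : R := Jq m / Iq m.

Lemma r_tele m : / (INR m + 1) ^ 2 = 2 * rq m - 2 * rq (S m).
Proof.
  pose proof (I_rec m) as HI. pose proof (J_rec m) as HJ.
  pose proof (I_pos m). pose proof (I_pos (S m)). pose proof (pos_INR m).
  unfold rq.
  assert (Ha : Iq m = (2 * INR m + 2) * Iq (S m) / (2 * INR m + 1)) by (rewrite HI; field; lra).
  assert (Hc : Jq m = (Iq (S m) + 2 * (INR m + 1) ^ 2 * Jq (S m)) / ((INR m + 1) * (2 * INR m + 1)))
    by (replace (Iq (S m) + 2 * (INR m + 1) ^ 2 * Jq (S m)) with ((INR m + 1) * (2 * INR m + 1) * Jq m) by lra;
        field; lra).
  rewrite Ha, Hc. field. repeat split; lra.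
Qed.

Lemma lim_inv1 : is_lim_seq (fun n => / (INR n + 1)) 0.
Proof.
  assert (H : is_lim_seq (fun n => INR n + 1) p_infty).
  { apply (is_lim_seq_ext (fun n => INR (S n))). { intros; apply S_INR. }
    apply (is_lim_seq_incr_1 INR). apply is_lim_seq_INR. }
  apply (is_lim_seq_inv _ _ H). discriminate.
Qed.

Lemma basel : is_series (fun k => / (INR k + 1) ^ 2) (PI ^ 2 / 6).
Proof.
  assert (Hs : forall N, sum_n (fun k => / (INR k + 1) ^ 2) N = PI^2/6 - 2 * rq (S N)).
  { assert (H0 : rq 0 = PI^2/12).
    { unfold rq. rewrite I0, J0. pose proof PI_RGT_0. field. lra. }
    induction N.
    - rewrite sum_O. rewrite r_tele, H0. simpl. lra.
    - rewrite sum_Sn, IHN, (r_tele (S N)). unfold plus; simpl; unfold Rminus; lra. }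
  assert (Hb : forall N, 0 <= rq (S N) <= / (INR N + 1)).
  { intros N. unfold rq. pose proof (I_pos N). pose proof (I_pos (S N)).
    pose proof (J_nonneg (S N)). pose proof (J_bound N). pose proof (I_rec N).
    pose proof (pos_INR N).
    split. { apply Rdiv_le_0_compat; lra. }
    assert (Iq N = (2 * INR N + 2) * Iq (S N) / (2 * INR N + 1)) by (rewrite H3; field; lra).
    rewrite H5 in H2.
    replace ((2 * INR N + 2) * Iq (S N) / (2 * INR N + 1) - Iq (S N)) with (Iq (S N) / (2 * INR N + 1)) in H2 by (field; lra).
    apply (Rle_trans _ (Iq (S N) / (2 * INR N + 1) / Iq (S N))).
    { unfold Rdiv at 1 3. apply Rmult_le_compat_r; [apply Rlt_le, Rinv_0_lt_compat; lra| lra]. }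
    replace (Iq (S N) / (2 * INR N + 1) / Iq (S N)) with (/ (2 * INR N + 1)) by (field; lra).
    apply Rinv_le_contravar; lra. }
  cut (is_lim_seq (sum_n (fun k => / (INR k + 1) ^ 2)) (PI^2/6)). { intro L; exact L. }
  apply (is_lim_seq_ext (fun N => PI^2/6 - 2 * rq (S N))). { intros; now rewrite Hs. }
  assert (L : is_lim_seq (fun N => PI^2/6 - 2 * rq (S N)) (PI^2/6 - 2 * 0)).
  { apply (is_lim_seq_minus' (fun _ => PI^2/6) (fun N => 2 * rq (S N))).
    - apply is_lim_seq_const.
    - apply (is_lim_seq_scal_l _ 2 0).
      apply (is_lim_seq_le_le (fun _ => 0) _ (fun N => / (INR N + 1))).
      + exact Hb.
      + apply is_lim_seq_const.
      + apply lim_inv1. }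
  rewrite Rmult_0_r, Rminus_0_r in L. exact L.
Qed.

Ltac toR := match goal with |- @eq _ ?x ?y => change (@eq R x y) end.

Lemma sumR_Sn (a : nat -> R) s N : (s <= N)%nat -> sum_n_m a s N = a s + sum_n_m a (S s) N.
Proof. intros; rewrite sum_Sn_m by lia; reflexivity. Qed.
Lemma sumR_nS (a : nat -> R) s N : (s <= S N)%nat -> sum_n_m a s (S N) = sum_n_m a s N + a (S N).
Proof. intros; rewrite sum_n_Sm by lia; reflexivity. Qed.
Lemma sumR_ext_loc (a b : nat -> R) s N : (forall k, (s <= k <= N)%nat -> a k = b k) -> sum_n_m a s N = sum_n_m b s N.
Proof. apply sum_n_m_ext_loc. Qed.
Lemma sumR_plus (a b : nat -> R) s N : sum_n_m (fun k => a k + b k) s N = sum_n_m a s N + sum_n_m b s N.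
Proof. apply (sum_n_m_plus a b). Qed.
Lemma sumR_scal (c : R) (a : nat -> R) s N : sum_n_m (fun k => c * a k) s N = c * sum_n_m a s N.
Proof. apply (sum_n_m_mult_l c a). Qed.
Lemma sumR_minus (a b : nat -> R) s N : sum_n_m (fun k => a k - b k) s N = sum_n_m a s N - sum_n_m b s N.
Proof.
  unfold Rminus. rewrite (sum_n_m_ext _ (fun k => a k + (-1) * b k)) by (intros; toR; ring).
  rewrite sumR_plus, sumR_scal. toR; ring.
Qed.
Lemma sumR_chasles (a : nat -> R) s m N : (s <= S m)%nat -> (m <= N)%nat ->
  sum_n_m a s N = sum_n_m a s m + sum_n_m a (S m) N.
Proof. intros; rewrite (sum_n_m_Chasles a s m N) by lia; reflexivity. Qed.

Lemma pairsum (a : nat -> R) d : forall s N, (s + d = N)%nat ->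
  2 * sum_n_m (fun k => a k * sum_n_m a k N) s N = (sum_n_m a s N)^2 + sum_n_m (fun k => a k ^ 2) s N.
Proof.
  induction d; intros s N HsN.
  - replace N with s by lia. rewrite !sum_n_n. toR; simpl; ring.
  - rewrite (sumR_Sn (fun k => a k * sum_n_m a k N)) by lia.
    rewrite (sumR_Sn (fun k => a k ^ 2)) by lia.
    pose proof (IHd (S s) N ltac:(lia)) as IH.
    rewrite (sumR_Sn a s N) by lia. toR. simpl pow in *. lra.
Qed.

Lemma sum_rev (f : nat -> R) N : sum_n_m f 0 N = sum_n_m (fun k => f (N - k)%nat) 0 N.
Proof.
  revert f; induction N; intros f.
  - rewrite !sum_n_n. reflexivity.
  - rewrite (sumR_Sn f) by lia. rewrite <- sum_n_m_S. rewrite (IHN (fun k => f (S k))).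
    rewrite (sumR_nS (fun k => f (S N - k)%nat)) by lia.
    replace (S N - S N)%nat with 0%nat by lia.
    rewrite Rplus_comm. f_equal. apply sumR_ext_loc. intros k Hk.
    f_equal. lia.
Qed.

Lemma sum_shift (f : nat -> R) a N : sum_n_m (fun k => f (a + k)%nat) 0 N = sum_n_m f a (a + N).
Proof.
  induction N.
  - rewrite Nat.add_0_r, !sum_n_n. f_equal; lia.
  - rewrite (sumR_nS (fun k => f (a + k)%nat) 0 N) by lia. rewrite IHN. replace (a + S N)%nat with (S (a + N)) by lia.
    rewrite (sumR_nS f a (a+N)) by lia. reflexivity.
Qed.

Definition hs (M : nat) : R := sum_n_m (fun k => / (INR k + 1)) 0 M.
Definition sq (M : nat) : R := sum_n_m (fun k => / (INR k + 1) ^ 2) 0 M.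
Definition altS (M : nat) : R := sum_n_m (fun k => (-1) ^ k / (INR k + 1)) 0 M.

Lemma m1sq k : (-1) ^ k * (-1) ^ k = 1.
Proof. rewrite <- Rpow_mult_distr. replace (-1 * -1) with 1 by ring. apply pow1. Qed.

Lemma m1sub k M : (k <= M)%nat -> (-1) ^ (M - k) = (-1) ^ M * (-1) ^ k.
Proof.
  intros H. replace M with ((M - k) + k)%nat at 2 by lia. rewrite pow_add.
  rewrite Rmult_assoc, m1sq. ring.
Qed.

Lemma m1even m : (-1) ^ (2 * m) = 1.
Proof. rewrite pow_mult. replace ((-1) ^ 2) with 1 by ring. apply pow1. Qed.

Lemma rev0 (g : R -> R) p :
  sum_n_m (fun k => g (INR (S p) - INR k)) 0 p = sum_n_m (fun k => g (INR k + 1)) 0 p.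
Proof.
  rewrite sum_rev. apply sumR_ext_loc. intros k Hk.
  rewrite minus_INR by lia. rewrite S_INR. f_equal. ring.
Qed.

Lemma rev1 (g : R -> R) p :
  sum_n_m (fun k => (-1) ^ k * g (INR (S p) - INR k)) 0 p = (-1) ^ p * sum_n_m (fun k => (-1) ^ k * g (INR k + 1)) 0 p.
Proof.
  rewrite sum_rev. rewrite <- sumR_scal. apply sumR_ext_loc. intros k Hk.
  rewrite m1sub by lia. rewrite minus_INR by lia. rewrite S_INR.
  replace (INR p + 1 - (INR p - INR k)) with (INR k + 1) by ring. ring.
Qed.

Lemma split2 (h : nat -> R) p :
  sum_n_m h 0 (2 * p + 1) = sum_n_m h 0 p + sum_n_m (fun k => h (S p + k)%nat) 0 p.
Proof.
  rewrite (sumR_chasles h 0 p (2 * p + 1)) by lia. f_equal.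
  rewrite sum_shift. f_equal. lia.
Qed.

Lemma altS_eq p : altS (2 * p + 1) = hs (2 * p + 1) - hs p.
Proof.
  induction p.
  - unfold altS, hs. simpl (2 * 0 + 1)%nat.
    rewrite !(sumR_nS _ 0 0) by lia. rewrite !sum_n_n. simpl. field.
  - replace (2 * S p + 1)%nat with (S (S (2 * p + 1))) by lia.
    unfold altS, hs in *.
    rewrite !(sumR_nS _ 0 (S (2 * p + 1))) by lia.
    rewrite !(sumR_nS _ 0 (2 * p + 1)) by lia.
    rewrite (sumR_nS _ 0 p) by lia.
    rewrite IHp.
    replace (S (2 * p + 1)) with (2 * (p + 1))%nat by lia.
    replace (S (2 * (p + 1))) with (S (2 * (p + 1)))%nat by lia.
    change ((-1) ^ S (2 * (p + 1))) with (-1 * (-1) ^ (2 * (p + 1))). rewrite m1even.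
    rewrite !S_INR, !mult_INR, !plus_INR. simpl INR.
    pose proof (pos_INR p). toR. field. repeat split; lra.
Qed.

Definition aa (p : nat) (m : nat) : R :=
  (-1) ^ m * (2 * INR m + 1) / ((INR (S p) - INR m) * (INR (S p) + INR m + 1)).

Lemma aa_split p k : (k <= p)%nat ->
  aa p k = (-1) ^ k * / (INR (S p) - INR k) - (-1) ^ k * / (INR (S p) + INR k + 1).
Proof.
  intros Hk. unfold aa. apply le_INR in Hk. rewrite S_INR. pose proof (pos_INR k).
  field. split; lra.
Qed.

Lemma F1 p : sum_n_m (aa p) 0 p = (-1) ^ p * altS (2 * p + 1).
Proof.
  rewrite (sumR_ext_loc _ (fun k => (-1) ^ k * / (INR (S p) - INR k) - (-1) ^ k * / (INR (S p) + INR k + 1)))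
    by (intros; apply aa_split; lia).
  rewrite sumR_minus.
  rewrite (rev1 Rinv p).
  assert (HA : sum_n_m (fun k => (-1) ^ k * / (INR k + 1)) 0 p = altS p).
  { unfold altS. apply sumR_ext_loc. intros. unfold Rdiv. toR. ring. }
  rewrite HA.
  assert (HB : altS (2 * p + 1) = altS p + (-1) ^ (S p) * sum_n_m (fun k => (-1) ^ k * / (INR (S p) + INR k + 1)) 0 p).
  { unfold altS at 1. rewrite split2. fold (altS p). f_equal.
    rewrite <- sumR_scal. apply sumR_ext_loc. intros k _.
    rewrite pow_add, plus_INR. unfold Rdiv. toR. ring. }
  set (Q := sum_n_m (fun k => (-1) ^ k * / (INR (S p) + INR k + 1)) 0 p) in *.
  rewrite HB. change ((-1) ^ S p) with (-1 * (-1) ^ p).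
  pose proof (m1sq p). toR. replace ((-1) ^ p * (altS p + -1 * (-1) ^ p * Q)) with ((-1) ^ p * altS p - ((-1) ^ p * (-1) ^ p) * Q) by ring. rewrite H. ring.
Qed.

Lemma F2 p : sum_n_m (fun k => aa p k ^ 2) 0 p = sq (2 * p + 1) - 2 / (2 * INR (S p) + 1) * hs (2 * p + 1).
Proof.
  set (x := INR (S p)).
  rewrite (sumR_ext_loc _ (fun k => (/ (x - INR k) ^ 2 + / (x + INR k + 1) ^ 2)
        - 2 / (2 * x + 1) * (/ (x - INR k) + / (x + INR k + 1)))).
  2:{ intros k Hk. rewrite aa_split by lia. fold x.
      replace (((-1) ^ k * / (x - INR k) - (-1) ^ k * / (x + INR k + 1)) ^ 2) with
        (((-1) ^ k * (-1) ^ k) * (/ (x - INR k) - / (x + INR k + 1)) ^ 2) by ring.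
      rewrite m1sq. assert (INR k <= INR p) by (apply le_INR; lia).
      pose proof (pos_INR k). unfold x; rewrite S_INR. toR. field. split; lra. }
  rewrite sumR_minus, sumR_plus, sumR_scal, sumR_plus.
  unfold x. rewrite (rev0 (fun y => / y ^ 2) p), (rev0 Rinv p).
  assert (H1 : sq (2 * p + 1) = sq p + sum_n_m (fun k => / (INR (S p) + INR k + 1) ^ 2) 0 p).
  { unfold sq at 1. rewrite split2. fold (sq p). f_equal. apply sumR_ext_loc. intros.
    rewrite plus_INR. reflexivity. }
  assert (H2 : hs (2 * p + 1) = hs p + sum_n_m (fun k => / (INR (S p) + INR k + 1)) 0 p).
  { unfold hs at 1. rewrite split2. fold (hs p). f_equal. apply sumR_ext_loc. intros.
    rewrite plus_INR. reflexivity. }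
  fold (sq p) (hs p). rewrite H1, H2. toR. ring.
Qed.



Lemma lim_inv1' : is_lim_seq (fun n => / (INR n + 1)) 0.
Proof.
  assert (H : is_lim_seq (fun n => INR n + 1) p_infty).
  { apply (is_lim_seq_ext (fun n => INR (S n))). { intros; apply S_INR. }
    apply (is_lim_seq_incr_1 INR). apply is_lim_seq_INR. }
  apply (is_lim_seq_inv _ _ H). discriminate.
Qed.

Lemma tele c : 0 < c -> is_series (fun k => / (INR k + c) - / (INR k + 1 + c)) (/ c).
Proof.
  intros Hc.
  assert (Hs : forall K, sum_n (fun k => / (INR k + c) - / (INR k + 1 + c)) K = / c - / (INR K + 1 + c)).
  { induction K.
    - rewrite sum_O. simpl. toR. replace (0 + c) with c by ring. reflexivity.
    - rewrite sum_Sn, IHK, S_INR. unfold plus; simpl. toR. ring. }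
  cut (is_lim_seq (sum_n (fun k => / (INR k + c) - / (INR k + 1 + c))) (/ c)). { intro L; exact L. }
  apply (is_lim_seq_ext (fun K => / c - / (INR K + 1 + c))). { intros; now rewrite Hs. }
  assert (L : is_lim_seq (fun K => / c - / (INR K + 1 + c)) (/ c - 0)).
  { apply (is_lim_seq_minus' (fun _ => / c) (fun K => / (INR K + 1 + c))).
    - apply is_lim_seq_const.
    - apply (is_lim_seq_le_le (fun _ => 0) _ (fun N => / (INR N + 1))).
      + intros N. pose proof (pos_INR N). split.
        * apply Rlt_le, Rinv_0_lt_compat; lra.
        * apply Rinv_le_contravar; lra.
      + apply is_lim_seq_const.
      + apply lim_inv1'. }
  rewrite Rminus_0_r in L. exact L.
Qed.

Lemma dig_series M : is_series (fun k => / (INR k + 1) - / (INR k + (INR (S M) + 1))) (hs M).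
Proof.
  induction M.
  - unfold hs. rewrite sum_n_n. simpl INR.
    apply (is_series_ext (fun k => / (INR k + 1) - / (INR k + 1 + 1))).
    { intros; toR. f_equal. f_equal. ring. }
    replace (/ (0 + 1)) with (/ 1) by (f_equal; ring). apply tele; lra.
  - assert (Ht := tele (INR (S M) + 1) ltac:(pose proof (pos_INR (S M)); lra)).
    pose proof (is_series_plus _ _ _ _ IHM Ht) as H.
    replace (hs (S M)) with (plus (hs M) (/ (INR (S M) + 1))).
    + revert H. apply is_series_ext. intros k. change (plus ?a ?b) with (a + b). toR.
      rewrite (S_INR (S M)).
      replace (INR k + 1 + (INR (S M) + 1)) with (INR k + (INR (S M) + 1 + 1)) by ring. ring.
    + unfold hs. rewrite (sum_n_Sm _ 0%nat M) by lia. reflexivity.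
Qed.

Lemma trig_series (Hb : is_series (fun k => / (INR k + 1) ^ 2) (PI ^ 2 / 6)) M :
  is_series (fun k => / (INR k + (INR (S M) + 1)) ^ 2) (PI ^ 2 / 6 - sq M).
Proof.
  induction M.
  - assert (H : is_series (fun k => / (INR (S k) + 1) ^ 2) (PI ^ 2 / 6 - sq 0)).
    { apply (is_series_incr_1 (fun k => / (INR k + 1) ^ 2)).
      match goal with |- is_series _ ?l => replace l with (PI ^ 2 / 6) end. exact Hb.
      unfold sq. rewrite sum_n_n. change (plus ?a ?b) with (a + b). toR. ring. }
    revert H. apply is_series_ext. intros k. rewrite S_INR. simpl (INR 1). toR. f_equal. f_equal. ring.
  - assert (H : is_series (fun k => / (INR (S k) + (INR (S M) + 1)) ^ 2) (PI ^ 2 / 6 - sq (S M))).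
    { apply (is_series_incr_1 (fun k => / (INR k + (INR (S M) + 1)) ^ 2)).
      match goal with |- is_series _ ?l => replace l with (PI ^ 2 / 6 - sq M) end. exact IHM.
      unfold sq. rewrite (sum_n_Sm _ 0%nat M) by lia. change (plus ?a ?b) with (a + b).
      change (plus ?a ?b) with (a + b). simpl (INR 0). toR. rewrite Rplus_0_l. ring. }
    revert H. apply is_series_ext. intros k. rewrite S_INR. rewrite (S_INR (S M)). toR. f_equal. f_equal. ring.
Qed.

Theorem mainTheorem6 (n : nat) (hn : (1 <= n)%nat) :
  sum_n_m (fun k =>
      (-1) ^ k * (2 * INR k + 1) / ((INR n - INR k) * (INR n + INR k + 1)) *
      sum_n_m (fun m =>
          (-1) ^ m * (2 * INR m + 1) / ((INR n - INR m) * (INR n + INR m + 1)))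
        k (n - 1))
    0 (n - 1)
  = PI ^ 2 / 12 - euler_gamma / (2 * INR n + 1)
    + / 2 * (digamma (2 * INR n + 1) - digamma (INR n + 1)) ^ 2
    - / (2 * INR n + 1) * digamma (2 * INR n + 1)
    - / 2 * trigamma (2 * INR n + 1).
Proof.
  destruct n as [|p]; [lia|].
  replace (S p - 1)%nat with p by lia.
  transitivity (sum_n_m (fun k => aa p k * sum_n_m (aa p) k p) 0 p); [reflexivity|].
  pose proof (pairsum (aa p) p 0 p ltac:(lia)) as P.
  rewrite F1, F2 in P.
  assert (E : 2 * INR (S p) + 1 = INR (S (2 * p + 1)) + 1).
  { rewrite (S_INR (2 * p + 1)), plus_INR, mult_INR, (S_INR p). simpl (INR 1). simpl (INR 2). lra. }
  assert (D1 : digamma (2 * INR (S p) + 1) = - euler_gamma + hs (2 * p + 1)).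
  { rewrite E. unfold digamma. rewrite (is_series_unique _ _ (dig_series _)). reflexivity. }
  assert (D2 : digamma (INR (S p) + 1) = - euler_gamma + hs p).
  { unfold digamma. rewrite (is_series_unique _ _ (dig_series _)). reflexivity. }
  assert (T1 : trigamma (2 * INR (S p) + 1) = PI ^ 2 / 6 - sq (2 * p + 1)).
  { rewrite E. unfold trigamma. rewrite (is_series_unique _ _ (trig_series basel _)). reflexivity. }
  rewrite D1, D2, T1.
  rewrite altS_eq in P.
  pose proof (m1sq p) as Hs.
  pose proof (pos_INR (S p)).
  set (A := hs (2 * p + 1)) in *. set (B := hs p) in *. set (C := sq (2 * p + 1)) in *.
  set (X := sum_n_m (fun k => aa p k * sum_n_m (aa p) k p) 0 p) in *.
  replace (((-1) ^ p * (A - B)) ^ 2) with (((-1) ^ p * (-1) ^ p) * (A - B) ^ 2) in P by ring.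
  rewrite Hs in P. toR.
  replace X with (/ 2 * (1 * (A - B) ^ 2 + (C - 2 / (2 * INR (S p) + 1) * A))) by (toR; lra).
  field. lra.
Qed.
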